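(* \begin{enumerate} \item Both maps $u,v:V(\mathcal{T}\mathcal{L})\mapsto \mathbb C$ define triangular lattices with $MR=-1$. In other words, if $\mathfrak{z}_1,\mathfrak{z}_2,\ldots,\mathfrak{z}_6$ are the vertices (listed counterclockwise) of any elementary hexagon of any of the hexagonal sublattices $\mathcal{H}\mathcal{L}_j$ $(j=0,1,2)$, and if $u_k=u(\mathfrak{z}_k)$ and $v_k=v(\mathfrak{z}_k)$, then there hold both the equations \begin{equation} M(u_1,u_2,\ldots,u_6)=-1 \end{equation} and \begin{equation} M(v_1,v_2,\ldots,v_6)=-1. \end{equation} \item Given a triangular lattice $u:V(\mathcal{T}\mathcal{L})\mapsto\mathbb C$ with $MR=-1$, there exists a unique, up to an affine transformation $v\mapsto av+b$, function $v:V(\mathcal{T}\mathcal{L})\mapsto\mathbb C$ such that the equation $\frac{u(\mathfrak{z}_2)-u(\mathfrak{z}_1)}{u(\mathfrak{z}_3)-u(\mathfrak{z}_2)}=\frac{v(\mathfrak{z}_3)-v(\mathfrak{z}_2)}{v(\mathfrak{z}_1)-v(\mathfrak{z}_3)}$ is satisfied everywhere. This function also defines a triangular lattice with $MR=-1$. \item Given a pair of complex--valued functions $(u,v)$ defined on $V(\mathcal{T}\mathcal{L})$ and satisfying this equation everywhere, there exists a unique, up to an affine transformation, function $w:V(\mathcal{T}\mathcal{L})\mapsto\mathbb C$ such that the pairs $(v,w)$ and $(w,u)$ satisfy the same equation. The function $w$ also defines a triangular lattice with $MR=-1$. \end{enumerate}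
   Context: $\mathcal{T}\mathcal{L}$ is the regular triangular lattice with vertices $k+\ell\omega+m\omega^2$, $\omega=e^{2\pi i/3}$, and edges of length 1; $\mathcal{H}\mathcal{L}_j$ ($j=0,1,2$) is its hexagonal sublattice with vertices satisfying $k+\ell+m\not\equiv j\pmod 3$, whose elementary hexagons have vertices $\mathfrak{z}'+\varepsilon^k$, $\varepsilon=e^{\pi i/3}$, around centers $\mathfrak{z}'$ with $k+\ell+m\equiv j\pmod 3$. The multi-ratio is $M(w_1,\dots,w_6)=\frac{(w_1-w_2)(w_3-w_4)(w_5-w_6)}{(w_2-w_3)(w_4-w_5)(w_6-w_1)}$; a map on $V(\mathcal{T}\mathcal{L})$ defines a triangular lattice with $MR=-1$ if this multi-ratio equals $-1$ on every elementary hexagon (vertices counterclockwise) of every $\mathcal{H}\mathcal{L}_j$. In part 1, $u,v$ are the fields of a solution of the $fgh$--system, i.e. they satisfy the equation $\frac{u(\mathfrak{z}_2)-u(\mathfrak{z}_1)}{u(\mathfrak{z}_3)-u(\mathfrak{z}_2)}=\frac{v(\mathfrak{z}_3)-v(\mathfrak{z}_2)}{v(\mathfrak{z}_1)-v(\mathfrak{z}_3)}$ on every elementary triangle with consecutive vertices $\mathfrak{z}_1,\mathfrak{z}_2,\mathfrak{z}_3$ such that $\mathfrak{z}_2-\mathfrak{z}_1,\mathfrak{z}_3-\mathfrak{z}_2,\mathfrak{z}_1-\mathfrak{z}_3\in\{1,\omega,\omega^2\}$ (positively oriented triangle). *)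

(* Defs.v *)
From HB Require Import structures.
From mathcomp Require Import all_boot all_order all_algebra.
From mathcomp Require Import reals complex.
Set Implicit Arguments. Unset Strict Implicit. Unset Printing Implicit Defensive.
Import Order.TTheory GRing.Theory Num.Theory.
Local Open Scope ring_scope.

(* A vertex k + l w + m w^2 of the triangular lattice TL (w = e^{2 pi i/3})
   is encoded by the pair (a,b) : int * int standing for the point a + b w
   (take a = k - m, b = l - m); this is a bijection Z^2 -> V(TL). *)
Definition vtx := (int * int)%type.
Definition vadd (z d : vtx) : vtx := (z.1 + d.1, z.2 + d.2).
Definition vsub (z d : vtx) : vtx := (z.1 - d.1, z.2 - d.2).

(* The three edge vectors 1, w, w^2 = -1 - w. *)
Definition unit_dir (d : vtx) : bool :=
  [|| d == (1, 0), d == (0, 1) | d == (-1, -1)].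

Definition pos_triangle (z1 z2 z3 : vtx) : bool :=
  [&& unit_dir (vsub z2 z1), unit_dir (vsub z3 z2) & unit_dir (vsub z1 z3)].

(* eps^k, eps = e^{i pi/3}: 1, 1+w, w, -1, w^2=-1-w, -w  (counterclockwise). *)
Definition eps_dir (k : nat) : vtx :=
  nth (0, 0) [:: (1, 0); (1, 1); (0, 1); (-1, 0); (-1, -1); (0, -1)] (k %% 6).

(* k + l + m mod 3 of the vertex a + b w, i.e. (a + b) mod 3. *)
Definition vclass (z : vtx) : int := ((z.1 + z.2) %% 3)%Z.

Definition multi_ratio (F : fieldType) (w1 w2 w3 w4 w5 w6 : F) : F :=
  ((w1 - w2) * (w3 - w4) * (w5 - w6)) / ((w2 - w3) * (w4 - w5) * (w6 - w1)).

(* u defines a triangular lattice with MR = -1: on every elementary hexagon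
   (vertices c + eps^(s+k), k = 0..5, listed counterclockwise starting from
   any vertex s) of every HL_j (center c with class j), the multi-ratio is
   defined (nonzero denominator) and equals -1. *)
Definition MR_minus1 (F : fieldType) (u : vtx -> F) : Prop :=
  forall (j : 'I_3) (c : vtx), vclass c = (j : nat)%:Z -> forall s : nat,
    let w k := u (vadd c (eps_dir (s + k))) in
    (w 1%N - w 2%N) * (w 3%N - w 4%N) * (w 5%N - w 0%N) != 0 /\
    multi_ratio (w 0%N) (w 1%N) (w 2%N) (w 3%N) (w 4%N) (w 5%N) = -1.

Definition fgh_eq (F : fieldType) (u v : vtx -> F) : Prop :=
  forall z1 z2 z3 : vtx, pos_triangle z1 z2 z3 ->
    [/\ u z3 - u z2 != 0, v z1 - v z3 != 0 &
        (u z2 - u z1) / (u z3 - u z2) = (v z3 - v z2) / (v z1 - v z3)].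

(* Main.v *)
Require Import Defs.
From HB Require Import structures.
From mathcomp Require Import all_boot all_order all_algebra.
From mathcomp Require Import reals complex.
From mathcomp Require Import ring lra zify.
Import GRing.Theory Num.Theory.
Set Implicit Arguments. Unset Strict Implicit.
Local Open Scope ring_scope.


Section Basics.
Variable F : fieldType.
Implicit Types u v w : vtx -> F.

Definition good u v (z1 z2 z3 : vtx) : Prop :=
  exists l : F, [/\ l != 0,
    [/\ u z2 - u z1 != 0, u z3 - u z2 != 0 & u z1 - u z3 != 0] &
    [/\ u z2 - u z1 = l * (v z3 - v z2), u z3 - u z2 = l * (v z1 - v z3)
      & u z1 - u z3 = l * (v z2 - v z1)]].

Lemma good_rot u v z1 z2 z3 : good u v z1 z2 z3 -> good u v z2 z3 z1.
Proof. by case=> l [l0 [n1 n2 n3] [e1 e2 e3]]; exists l; split. Qed.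

Lemma good_vnz u v z1 z2 z3 : good u v z1 z2 z3 ->
  [/\ v z3 - v z2 != 0, v z1 - v z3 != 0 & v z2 - v z1 != 0].
Proof.
case=> l [l0 [n1 n2 n3] [e1 e2 e3]]; split.
- by apply: contra n1; rewrite e1 => /eqP ->; rewrite mulr0.
- by apply: contra n2; rewrite e2 => /eqP ->; rewrite mulr0.
- by apply: contra n3; rewrite e3 => /eqP ->; rewrite mulr0.
Qed.

Lemma pos_rot z1 z2 z3 : pos_triangle z1 z2 z3 -> pos_triangle z2 z3 z1.
Proof. by rewrite /pos_triangle => /and3P [a b c]; apply/and3P; split. Qed.

Lemma fgh_good u v : fgh_eq u v <->
  (forall z1 z2 z3, pos_triangle z1 z2 z3 -> good u v z1 z2 z3).
Proof.
split.
- move=> H z1 z2 z3 p.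
  have [n2 m1 r] := H _ _ _ p.
  have [n3 m2 _] := H _ _ _ (pos_rot p).
  have [n1 m3 _] := H _ _ _ (pos_rot (pos_rot p)).
  exists ((u z3 - u z2) / (v z1 - v z3)); split.
  + by rewrite mulf_neq0 // invr_eq0.
  + by split.
  + have e1 : u z2 - u z1 = (u z3 - u z2) * (v z3 - v z2) / (v z1 - v z3).
      by rewrite -[LHS](divfK n2) r; field.
    split.
    * by rewrite e1; field.
    * by field.
    * have -> : u z1 - u z3 = - (u z2 - u z1) - (u z3 - u z2) by ring.
      by rewrite e1; field.
- move=> H z1 z2 z3 p.
  have G := H _ _ _ p.
  have [_ w2 _] := good_vnz G.
  case: G => l [l0 [n1 n2 n3] [e1 e2 e3]]; split => //.
  by rewrite e1 e2; field; rewrite l0 w2.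
Qed.

Lemma good_trans u v w z1 z2 z3 :
  good u v z1 z2 z3 -> good v w z1 z2 z3 -> good w u z1 z2 z3.
Proof.
move=> G1 G2; have [a1 a2 a3] := good_vnz G2.
case: G1 => l [l0 [n1 n2 n3] [e1 e2 e3]].
case: G2 => m [m0 [p1 p2 p3] [f1 f2 f3]].
exists (l * m)^-1; split.
- by rewrite invr_eq0 mulf_neq0.
- by split.
- split.
  + by rewrite e2 f3; field; rewrite l0 m0.
  + by rewrite e3 f1; field; rewrite l0 m0.
  + by rewrite e1 f2; field; rewrite l0 m0.
Qed.

End Basics.


Lemma vsub_cc (c d1 d2 : vtx) : vsub (vadd c d1) (vadd c d2) = vsub d1 d2.
Proof. case: c d1 d2 => [a b] [x y] [p q]; rewrite /vsub /vadd /=; congr pair; ring. Qed.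

Lemma pos_tri_c c d1 d2 : pos_triangle c (vadd c d1) (vadd c d2) = pos_triangle (0,0) d1 d2.
Proof.
have e1 : vsub (vadd c d1) c = vsub d1 (0,0).
  by case: c d1 => [a b] [x y]; rewrite /vsub /vadd /=; congr pair; ring.
have e2 : vsub c (vadd c d2) = vsub (0,0) d2.
  by clear e1; case: c d2 => [a b] [x y]; rewrite /vsub /vadd /=; congr pair; ring.
by rewrite /pos_triangle e1 e2 vsub_cc.
Qed.

Lemma eps_per n : eps_dir (n + 6) = eps_dir n.
Proof. by rewrite /eps_dir modnDr. Qed.

Section Hex.
Variable F : fieldType.

Lemma per_mod (W : nat -> F) : (forall n, W (n+6)%N = W n) -> forall n, W n = W (n %% 6)%N.
Proof.
move=> P n; rewrite {1}(divn_eq n 6); elim: (n %/ 6)%N => [|q IH].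
  by rewrite mul0n add0n.
by rewrite mulSn -addnA addnC P.
Qed.

Lemma all6 (W : nat -> F) : (forall n, W (n+6)%N = W n) ->
  W 1%N - W 0%N != 0 -> W 2%N - W 1%N != 0 -> W 3%N - W 2%N != 0 ->
  W 4%N - W 3%N != 0 -> W 5%N - W 4%N != 0 -> W 0%N - W 5%N != 0 ->
  forall k, W k.+1 - W k != 0.
Proof.
move=> P h0 h1 h2 h3 h4 h5 k.
rewrite (per_mod P k.+1) (per_mod P k) -addn1 -modnDml.
have : (k %% 6 < 6)%N by rewrite ltn_pmod.
by case: (k %% 6)%N => [|[|[|[|[|[|//]]]]]].
Qed.

Lemma hex_good (u v : vtx -> F) c :
  (forall z1 z2 z3, pos_triangle z1 z2 z3 -> good u v z1 z2 z3) ->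
  let U n := u (vadd c (eps_dir n)) in let V n := v (vadd c (eps_dir n)) in
  [/\ (forall k, U k.+1 - U k != 0),
      (U 1%N - U 0%N)*(U 3%N - U 2%N)*(U 5%N - U 4%N) +
        (U 2%N - U 1%N)*(U 4%N - U 3%N)*(U 0%N - U 5%N) = 0,
      (forall k, V k.+1 - V k != 0) &
      (V 1%N - V 0%N)*(V 3%N - V 2%N)*(V 5%N - V 4%N) +
        (V 2%N - V 1%N)*(V 4%N - V 3%N)*(V 0%N - V 5%N) = 0].
Proof.
move=> G U V.
pose H n := vadd c (eps_dir n).
have T0 := G c (H 0%N) (H 1%N) ltac:(by rewrite pos_tri_c).
have T1 := G c (H 2%N) (H 1%N) ltac:(by rewrite pos_tri_c).
have T2 := G c (H 2%N) (H 3%N) ltac:(by rewrite pos_tri_c).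
have T3 := G c (H 4%N) (H 3%N) ltac:(by rewrite pos_tri_c).
have T4 := G c (H 4%N) (H 5%N) ltac:(by rewrite pos_tri_c).
have T5 := G c (H 0%N) (H 5%N) ltac:(by rewrite pos_tri_c).
have [a0 b0 c0] := good_vnz T0; have [a1 b1 c1] := good_vnz T1.
have [a2 b2 c2] := good_vnz T2; have [a3 b3 c3] := good_vnz T3.
have [a4 b4 c4] := good_vnz T4; have [a5 b5 c5] := good_vnz T5.
case: T0 => l0 [l0n [_ n0 _] [e01 e02 e03]].
case: T1 => l1 [l1n [_ n1 _] [e11 e12 e13]].
case: T2 => l2 [l2n [_ n2 _] [e21 e22 e23]].
case: T3 => l3 [l3n [_ n3 _] [e31 e32 e33]].
case: T4 => l4 [l4n [_ n4 _] [e41 e42 e43]].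
case: T5 => l5 [l5n [_ n5 _] [e51 e52 e53]].
rewrite /H in a0 b0 c0 a1 b1 c1 a2 b2 c2 a3 b3 c3 a4 b4 c4 a5 b5 c5.
rewrite /H in n0 n1 n2 n3 n4 n5 e01 e02 e03 e11 e12 e13 e21 e22 e23.
rewrite /H in e31 e32 e33 e41 e42 e43 e51 e52 e53.
rewrite /U /V; clear H U V.
have L : l0 * l2 * l4 = l1 * l3 * l5.
  apply: (mulIf (x := (v (vadd c (eps_dir 0)) - v c) * (v (vadd c (eps_dir 2)) - v c)
     * (v (vadd c (eps_dir 4)) - v c))); first by rewrite !mulf_neq0.
  transitivity ((u c - u (vadd c (eps_dir 1))) * (u c - u (vadd c (eps_dir 3)))
     * (u c - u (vadd c (eps_dir 5)))).
  - by rewrite e03 e23 e43; ring.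
  - by rewrite e13 e33 e53; ring.
have Pu : forall n, u (vadd c (eps_dir (n + 6))) = u (vadd c (eps_dir n)).
  by move=> n; rewrite eps_per.
have Pv : forall n, v (vadd c (eps_dir (n + 6))) = v (vadd c (eps_dir n)).
  by move=> n; rewrite eps_per.
split.
- apply: (all6 (W := fun n => u (vadd c (eps_dir n)))) => //=;
    by rewrite -oppr_eq0 opprB.
- transitivity ((u (vadd c (eps_dir 1)) - u (vadd c (eps_dir 0))) *
     (u (vadd c (eps_dir 3)) - u (vadd c (eps_dir 2))) *
     (u (vadd c (eps_dir 5)) - u (vadd c (eps_dir 4))) -
     (u (vadd c (eps_dir 1)) - u (vadd c (eps_dir 2))) *
     (u (vadd c (eps_dir 3)) - u (vadd c (eps_dir 4))) *
     (u (vadd c (eps_dir 5)) - u (vadd c (eps_dir 0)))); first by ring.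
  rewrite e02 e22 e42 e12 e32 e52.
  transitivity ((l0 * l2 * l4 - l1 * l3 * l5) *
    ((v c - v (vadd c (eps_dir 1))) * (v c - v (vadd c (eps_dir 3))) *
     (v c - v (vadd c (eps_dir 5))))); first by ring.
  by rewrite L subrr mul0r.
- apply: (all6 (W := fun n => v (vadd c (eps_dir n)))) => //=;
    by rewrite -oppr_eq0 opprB.
- have Ln : l1 * l3 * l5 != 0 by rewrite !mulf_neq0.
  apply: (mulIf Ln); rewrite mul0r.
  transitivity ((l0 * (v (vadd c (eps_dir 1)) - v (vadd c (eps_dir 0)))) *
     (l2 * (v (vadd c (eps_dir 3)) - v (vadd c (eps_dir 2)))) *
     (l4 * (v (vadd c (eps_dir 5)) - v (vadd c (eps_dir 4)))) -
     (l1 * (v (vadd c (eps_dir 1)) - v (vadd c (eps_dir 2)))) *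
     (l3 * (v (vadd c (eps_dir 3)) - v (vadd c (eps_dir 4)))) *
     (l5 * (v (vadd c (eps_dir 5)) - v (vadd c (eps_dir 0))))).
  + transitivity ((v (vadd c (eps_dir 1)) - v (vadd c (eps_dir 0))) *
       (v (vadd c (eps_dir 3)) - v (vadd c (eps_dir 2))) *
       (v (vadd c (eps_dir 5)) - v (vadd c (eps_dir 4))) * (l0 * l2 * l4) +
       (v (vadd c (eps_dir 2)) - v (vadd c (eps_dir 1))) *
       (v (vadd c (eps_dir 4)) - v (vadd c (eps_dir 3))) *
       (v (vadd c (eps_dir 0)) - v (vadd c (eps_dir 5))) * (l1 * l3 * l5)).
      by rewrite L; ring.
    ring.
  + rewrite -e01 -e21 -e41 -e11 -e31 -e51; ring.
Qed.

End Hex.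
Section Hex2.
Variable F : fieldType.

Lemma div_eqN1 (x y : F) : y != 0 -> x + y = 0 -> x / y = -1.
Proof.
move=> y0 h; rewrite (_ : x = -y) ?mulNr ?divff //.
by apply/eqP; rewrite -addr_eq0 h.
Qed.

Lemma hexMR (W : nat -> F) :
 (forall n, W (n + 6)%N = W n) -> (forall k, W k.+1 - W k != 0) ->
 (W 1%N - W 0%N)*(W 3%N - W 2%N)*(W 5%N - W 4%N) +
   (W 2%N - W 1%N)*(W 4%N - W 3%N)*(W 0%N - W 5%N) = 0 ->
 forall s, let w k := W (s + k)%N in
   (w 1%N - w 2%N) * (w 3%N - w 4%N) * (w 5%N - w 0%N) != 0 /\
   multi_ratio (w 0%N) (w 1%N) (w 2%N) (w 3%N) (w 4%N) (w 5%N) = -1.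
Proof.
move=> P E I s w; rewrite {}/w.
have Q q n : W (q * 6 + n)%N = W n.
  elim: q => [|q IH] //; by rewrite mulSn -addnA addnC P.
have E' k : W k - W k.+1 != 0 by rewrite -oppr_eq0 opprB.
have E5 k : W (k + 5)%N - W k != 0.
  by have := E (k+5)%N; rewrite -addnS P => h; rewrite -oppr_eq0 opprB.
have P6 : W 6%N = W 0%N by exact: (P 0%N).
have P7 : W 7%N = W 1%N by exact: (P 1%N).
have P8 : W 8%N = W 2%N by exact: (P 2%N).
have P9 : W 9%N = W 3%N by exact: (P 3%N).
have P10 : W 10%N = W 4%N by exact: (P 4%N).
have n0 := E 0%N; have n1 := E 1%N; have n2 := E 2%N; have n3 := E 3%N;
have n4 := E 4%N; have n5 := E 5%N; rewrite P6 in n5.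
rewrite /multi_ratio (divn_eq s 6).
have r6 : (s %% 6 < 6)%N by rewrite ltn_pmod.
move: (s %/ 6)%N (s %% 6)%N r6 => q r r6.
rewrite -!addnA !Q.
case: r r6 => [|[|[|[|[|[|//]]]]]] _ /=.
all: split; [|apply: div_eqN1]; try (rewrite !mulf_neq0 //; first [exact: E' | exact: E5]).
all: rewrite ?P6 ?P7 ?P8 ?P9 ?P10.
all: first [ transitivity ((W 1%N - W 0%N)*(W 3%N - W 2%N)*(W 5%N - W 4%N) +
   (W 2%N - W 1%N)*(W 4%N - W 3%N)*(W 0%N - W 5%N)); [ring|exact I]
  | transitivity (- ((W 1%N - W 0%N)*(W 3%N - W 2%N)*(W 5%N - W 4%N) +
   (W 2%N - W 1%N)*(W 4%N - W 3%N)*(W 0%N - W 5%N))); [ring|by rewrite I oppr0] ].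
Qed.
End Hex2.

Lemma part1 (F : fieldType) (u v : vtx -> F) : fgh_eq u v -> MR_minus1 u /\ MR_minus1 v.
Proof.
move/fgh_good => G; split => j c _ s; have [a b c' d] := hex_good c G.
- by apply: (hexMR (W := fun n => u (vadd c (eps_dir n)))) => // n; rewrite eps_per.
- by apply: (hexMR (W := fun n => v (vadd c (eps_dir n)))) => // n; rewrite eps_per.
Qed.


Lemma int_ind2 (P : int -> Prop) : P 0 -> (forall n, P n -> P (n + 1)) ->
  (forall n, P (n + 1) -> P n) -> forall n, P n.
Proof.
move=> P0 S B [n|n].
- elim: n => // n IH; have -> : Posz n.+1 = Posz n + 1 by lia.
  exact: S.
- elim: n => [|n IH]; apply: B.
  + by have -> : Negz 0 + 1 = 0 by lia.
  + by have -> : Negz n.+1 + 1 = Negz n by lia.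
Qed.

Lemma invariance (T : Type) (g : vtx -> T) :
  (forall a b, g (a + 1, b) = g (a, b)) -> (forall a b, g (a, b + 1) = g (a, b)) ->
  forall z, g z = g (0, 0).
Proof.
move=> Hx Hy [a b].
transitivity (g (0, b)).
- elim/int_ind2: a => // n IH; first by rewrite Hx.
  by rewrite -IH Hx.
- elim/int_ind2: b => // n IH; first by rewrite Hy.
  by rewrite -IH Hy.
Qed.

Lemma posU a b : pos_triangle (a, b) (a + 1, b) (a + 1, b + 1).
Proof.
have e1 : (a + 1, b) = vadd (a, b) (1, 0) by rewrite /vadd /= addr0.
have e2 : (a + 1, b + 1) = vadd (a, b) (1, 1) by [].
by rewrite e1 e2 pos_tri_c.
Qed.

Lemma posD a b : pos_triangle (a, b) (a, b + 1) (a + 1, b + 1).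
Proof.
have e1 : (a, b + 1) = vadd (a, b) (0, 1) by rewrite /vadd /= addr0.
have e2 : (a + 1, b + 1) = vadd (a, b) (1, 1) by [].
by rewrite e1 e2 pos_tri_c.
Qed.

Section Uniq.
Variable F : fieldType.
Implicit Types u v : vtx -> F.

Definition rho (v1 v2 : vtx -> F) (z z' : vtx) := (v2 z' - v2 z) / (v1 z' - v1 z).

Lemma rhoC v1 v2 z z' : rho v1 v2 z z' = rho v1 v2 z' z.
Proof. by rewrite /rho -[v2 z' - _]opprB -[v1 z' - _]opprB invrN mulrNN. Qed.

Lemma tri_rho u v1 v2 z1 z2 z3 : good u v1 z1 z2 z3 -> good u v2 z1 z2 z3 ->
  rho v1 v2 z1 z2 = rho v1 v2 z2 z3 /\ rho v1 v2 z2 z3 = rho v1 v2 z3 z1.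
Proof.
move=> G1 G2; have [a1 a2 a3] := good_vnz G1; have [b1 b2 b3] := good_vnz G2.
case: G1 => l [l0 _ [e1 e2 e3]]; case: G2 => m [m0 _ [f1 f2 f3]].
have k1 : v2 z3 - v2 z2 = l / m * (v1 z3 - v1 z2).
  by apply: (mulfI m0); rewrite -f1 e1; field.
have k2 : v2 z1 - v2 z3 = l / m * (v1 z1 - v1 z3).
  by apply: (mulfI m0); rewrite -f2 e2; field.
have k3 : v2 z2 - v2 z1 = l / m * (v1 z2 - v1 z1).
  by apply: (mulfI m0); rewrite -f3 e3; field.
by rewrite /rho k1 k2 k3 !mulfK.
Qed.

Lemma fgh_uniq u v1 v2 : fgh_eq u v1 -> fgh_eq u v2 ->
  exists a b, a != 0 /\ forall z, v2 z = a * v1 z + b.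
Proof.
move/fgh_good=> G1 /fgh_good G2.
pose r a b := rho v1 v2 (a, b) (a + 1, b).
have TU a b := tri_rho (G1 _ _ _ (posU a b)) (G2 _ _ _ (posU a b)).
have TD a b := tri_rho (G1 _ _ _ (posD a b)) (G2 _ _ _ (posD a b)).
have ry a b : r a (b + 1) = r a b.
  have [x1 x2] := TU a b; have [y1 y2] := TD a b.
  by rewrite /r x1 x2 -y2 -y1.
have rx a b : r (a + 1) b = r a b.
  have [x1 x2] := TU a b; have [y1 y2] := TD (a + 1) b.
  by rewrite -ry /r x1 y1 rhoC.
have rc a b : r a b = r 0 0 := invariance (g := fun z => r z.1 z.2) rx ry (a, b).
exists (r 0 0), (v2 (0, 0) - r 0 0 * v1 (0, 0)); split.
- have [_ _ n] := good_vnz (G2 _ _ _ (posU 0 0)).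
  have [_ _ n'] := good_vnz (G1 _ _ _ (posU 0 0)).
  by rewrite /r /rho mulf_neq0 // invr_eq0.
- pose g z := v2 z - r 0 0 * v1 z.
  suff gc : forall z, g z = g (0, 0).
    by move=> z; have := gc z; rewrite /g => <-; ring.
  apply: invariance => a b.
  + have [_ _ n'] := good_vnz (G1 _ _ _ (posU a b)).
    rewrite /g -(rc a b) /r /rho; field.
    done.
  + have [_ _ n'] := good_vnz (G1 _ _ _ (posD a b)).
    have [x1 x2] := TU a b; have [y1 y2] := TD a b.
    have e : r a b = rho v1 v2 (a, b) (a, b + 1) by rewrite /r x1 x2 -y2 -y1.
    by rewrite /g -(rc a b) e /rho; field.
Qed.
End Uniq.


Lemma vclass_ord (c : vtx) : exists j : 'I_3, vclass c = (j : nat)%:Z.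
Proof.
have h0 : 0 <= vclass c by rewrite /vclass modz_ge0.
have h3 : vclass c < 3 by rewrite /vclass ltz_pmod.
move: h0 h3; case: (vclass c) => [n|n] // _ h3.
have hn : (n < 3)%N by [].
by exists (Ordinal hn).
Qed.

Section MRhex.
Variable F : fieldType.

Lemma MR_hexU (u : vtx -> F) c : MR_minus1 u ->
  let U n := u (vadd c (eps_dir n)) in
  (forall k, U k.+1 - U k != 0) /\
  (U 1%N - U 0%N)*(U 3%N - U 2%N)*(U 5%N - U 4%N) +
        (U 2%N - U 1%N)*(U 4%N - U 3%N)*(U 0%N - U 5%N) = 0.
Proof.
move=> H U.
have [j hj] := vclass_ord c.
have h0 : let w k := U (0 + k)%N in
    (w 1%N - w 2%N) * (w 3%N - w 4%N) * (w 5%N - w 0%N) != 0 /\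
    multi_ratio (w 0%N) (w 1%N) (w 2%N) (w 3%N) (w 4%N) (w 5%N) = -1 := H j c hj 0%N.
have h1 : let w k := U (1 + k)%N in
    (w 1%N - w 2%N) * (w 3%N - w 4%N) * (w 5%N - w 0%N) != 0 /\
    multi_ratio (w 0%N) (w 1%N) (w 2%N) (w 3%N) (w 4%N) (w 5%N) = -1 := H j c hj 1%N.
have P6 : U 6%N = U 0%N by rewrite /U (eps_per 0).
move: h0 h1; rewrite /= !add0n !add1n P6 /multi_ratio.
move=> [n0 m0] [n1 _].
move: n0 n1; rewrite !mulf_eq0 !negb_or => /andP [/andP [a1 a3] a5] /andP [/andP [a2 a4] a0].
have PU : forall n, U (n + 6)%N = U n by move=> n; rewrite /U eps_per.
split.
- apply: all6 => //; by rewrite -oppr_eq0 opprB.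
- have D0 : (U 1%N - U 2%N) * (U 3%N - U 4%N) * (U 5%N - U 0%N) != 0 by rewrite !mulf_neq0.
  have := congr1 (fun t => t * ((U 1%N - U 2%N) * (U 3%N - U 4%N) * (U 5%N - U 0%N))) m0.
  rewrite /= divfK // mulN1r => e.
  transitivity (- ((U 0%N - U 1%N) * (U 2%N - U 3%N) * (U 4%N - U 5%N) +
     (U 1%N - U 2%N) * (U 3%N - U 4%N) * (U 5%N - U 0%N))); first by ring.
  by rewrite e addNr oppr0.
Qed.
End MRhex.


Section Integ.
Variables (T : Type) (op : T -> T -> T) (inv : T -> T) (e : T).
Hypotheses (opA : forall x y z, op x (op y z) = op (op x y) z)
  (opC : forall x y, op x y = op y x) (op1 : forall x, op e x = x)
  (opV : forall x, op (inv x) x = e).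

Lemma opCA x y z : op x (op y z) = op y (op x z).
Proof. by rewrite !opA (opC x y). Qed.

Lemma opK x y : op x (op (inv x) y) = y.
Proof. by rewrite opA (opC x) opV op1. Qed.

Lemma opI x y z : op x y = op x z -> y = z.
Proof. by move=> h; have := congr1 (op (inv x)) h; rewrite !opA opV !op1. Qed.

Fixpoint gpos (f : int -> T) (n : nat) : T :=
  if n is n'.+1 then op (f (Posz n')) (gpos f n') else e.
Fixpoint gneg (f : int -> T) (n : nat) : T :=
  if n is n'.+1 then op (inv (f (Negz n))) (gneg f n') else op (inv (f (Negz 0))) e.
Definition integ1 f (z : int) : T :=
  match z with Posz n => gpos f n | Negz n => gneg f n end.

Lemma integ1_0 f : integ1 f 0 = e. Proof. by []. Qed.

Lemma integ1S f z : integ1 f (z + 1) = op (f z) (integ1 f z).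
Proof.
case: z => [n|[|n]].
- rewrite (_ : Posz n + 1 = Posz n.+1); [reflexivity | lia].
- rewrite (_ : Negz 0 + 1 = 0); [by rewrite /= opK | lia].
- rewrite (_ : Negz n.+1 + 1 = Negz n); [by rewrite /= opK | lia].
Qed.

Lemma integ2 (X Y : int -> int -> T) :
  (forall a b, op (X a b) (Y (a + 1) b) = op (Y a b) (X a (b + 1))) ->
  exists L : int -> int -> T, forall a b,
    L (a + 1) b = op (X a b) (L a b) /\ L a (b + 1) = op (Y a b) (L a b).
Proof.
move=> C.
pose G := integ1 (fun a => X a 0).
pose K a := integ1 (Y a).
have Q a b : op (X a 0) (K (a + 1) b) = op (X a b) (K a b).
  elim/int_ind2: b => [|b IH|b IH].
  - by rewrite /K !integ1_0.
  - rewrite /K !integ1S -/(K _) opCA IH.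
    by rewrite opA (opC (Y _ _) (X _ _)) C -opA opCA.
  - move: IH; rewrite /K !integ1S -/(K _) => IH.
    apply: (@opI (Y (a + 1) b)); rewrite opCA IH.
    by rewrite [RHS]opA (opC (Y _ _) (X _ _)) C -opA opCA.
exists (fun a b => op (G a) (K a b)) => a b; split.
- by rewrite /= /G integ1S -opA opCA Q opCA.
- by rewrite /K integ1S opCA.
Qed.
End Integ.

Lemma integ_add (V : zmodType) (X Y : int -> int -> V) :
  (forall a b, X a b + Y (a + 1) b = Y a b + X a (b + 1)) ->
  exists L : int -> int -> V, forall a b,
    L (a + 1) b = X a b + L a b /\ L a (b + 1) = Y a b + L a b.
Proof.
move=> C.
have := @integ2 V +%R -%R 0 (@addrA V) (@addrC V) (@add0r V) (@addNr V) X Y C.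
by [].
Qed.

Lemma integ_mul (F : fieldType) (X Y : int -> int -> F) :
  (forall a b, X a b != 0) -> (forall a b, Y a b != 0) ->
  (forall a b, X a b * Y (a + 1) b = Y a b * X a (b + 1)) ->
  exists L : int -> int -> F, (forall a b, L a b != 0) /\ forall a b,
    L (a + 1) b = X a b * L a b /\ L a (b + 1) = Y a b * L a b.
Proof.
move=> hX hY C.
pose NZ := {x : F | x != 0}.
pose op (x y : NZ) : NZ := exist _ (val x * val y) (mulf_neq0 (valP x) (valP y)).
pose inv (x : NZ) : NZ := exist _ (val x)^-1 (invr_neq0 (valP x)).
pose e : NZ := exist _ 1 (oner_neq0 F).
pose Xs a b : NZ := exist _ (X a b) (hX a b).
pose Ys a b : NZ := exist _ (Y a b) (hY a b).
have oA : forall x y z, op x (op y z) = op (op x y) z.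
  by move=> x y z; apply: val_inj; rewrite /= mulrA.
have oC : forall x y, op x y = op y x.
  by move=> x y; apply: val_inj; rewrite /= mulrC.
have o1 : forall x, op e x = x by move=> x; apply: val_inj; rewrite /= mul1r.
have oV : forall x, op (inv x) x = e.
  by move=> x; apply: val_inj; rewrite /= mulVf // (valP x).
have Cs : forall a b, op (Xs a b) (Ys (a + 1) b) = op (Ys a b) (Xs a (b + 1)).
  by move=> a b; apply: val_inj; rewrite /= C.
have [L HL] := integ2 oA oC o1 oV Cs.
exists (fun a b => val (L a b)); split.
- by move=> a b; exact: (valP (L a b)).
- by move=> a b; have [h1 h2] := HL a b; rewrite h1 h2.
Qed.


Section Exist.
Variable F : fieldType.

Lemma MR_facts0 (u : vtx -> F) (a b : int) : MR_minus1 u ->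
  [/\ u (a + 1, b) - u (a, b) != 0, u (a, b + 1) - u (a, b) != 0,
      u (a + 1 + 1, b + 1) - u (a + 1, b) != 0 &
      (u (a + 1 + 1, b + 1) - u (a + 1, b)) * (u (a, b + 1) - u (a, b)) *
      (u (a + 1 + 1, b + 1 + 1) - u (a + 1, b + 1 + 1)) =
      (u (a + 1, b) - u (a, b)) * (u (a + 1, b + 1 + 1) - u (a, b + 1)) *
      (u (a + 1 + 1, b + 1 + 1) - u (a + 1 + 1, b + 1))].
Proof.
move=> H.
have := MR_hexU (a + 1, b + 1) H.
move=> [N I].
have := N 3%N. have := N 4%N. have := N 5%N. move: I.
rewrite /vadd /eps_dir /= !addr0 !addrK => I n5 n4 n3; split => //.
- by rewrite -oppr_eq0 opprB.
- apply/eqP; rewrite -subr_eq0; apply/eqP; rewrite -[RHS]I; ring.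
Qed.

Lemma MR_facts (u : vtx -> F) : MR_minus1 u ->
  [/\ forall a b, u (a + 1, b) - u (a, b) != 0,
      forall a b, u (a, b + 1) - u (a, b) != 0,
      forall a b, u (a + 1, b + 1) - u (a, b) != 0 &
      forall a b, (u (a + 1 + 1, b + 1) - u (a + 1, b)) * (u (a, b + 1) - u (a, b)) *
      (u (a + 1 + 1, b + 1 + 1) - u (a + 1, b + 1 + 1)) =
      (u (a + 1, b) - u (a, b)) * (u (a + 1, b + 1 + 1) - u (a, b + 1)) *
      (u (a + 1 + 1, b + 1 + 1) - u (a + 1 + 1, b + 1))].
Proof.
move=> H; split => a b; try by have [] := MR_facts0 a b H.
by have [_ _ h _] := MR_facts0 (a - 1) b H; rewrite subrK in h.
Qed.
End Exist.


Lemma unit_dirP d : unit_dir d -> [\/ d = (1, 0), d = (0, 1) | d = (-1, -1)].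
Proof.
by rewrite /unit_dir => /or3P [/eqP->|/eqP->|/eqP->]; [constructor 1|constructor 2|constructor 3].
Qed.

Lemma tri_cases (P : vtx -> vtx -> vtx -> Prop) :
  (forall a b, P (a, b) (a + 1, b) (a + 1, b + 1)) ->
  (forall a b, P (a, b) (a, b + 1) (a + 1, b + 1)) ->
  (forall x y z, P x y z -> P y z x) ->
  forall z1 z2 z3, pos_triangle z1 z2 z3 -> P z1 z2 z3.
Proof.
move=> HU HD Hr [x1 y1] [x2 y2] [x3 y3] /and3P [h1 h2 h3].
rewrite /vsub /= in h1 h2 h3.
have Pt : forall A B C z1 z2 z3, P A B C -> A = z1 -> B = z2 -> C = z3 -> P z1 z2 z3.
  by move=> A B C z1 z2 z3 p <- <- <-.
case/unit_dirP: h1 => -[e1 e1']; case/unit_dirP: h2 => -[e2 e2'];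
case/unit_dirP: h3 => -[e3 e3'].
all: try first [ exfalso; lia
  | apply: (Pt _ _ _ _ _ _ (HU x1 y1)); first [done | congr pair; lia]
  | apply: (Pt _ _ _ _ _ _ (Hr _ _ _ (HU (x1 - 1) y1))); first [done | congr pair; lia]
  | apply: (Pt _ _ _ _ _ _ (Hr _ _ _ (Hr _ _ _ (HU (x1 - 1) (y1 - 1))))); first [done | congr pair; lia]
  | apply: (Pt _ _ _ _ _ _ (HD x1 y1)); first [done | congr pair; lia]
  | apply: (Pt _ _ _ _ _ _ (Hr _ _ _ (HD x1 (y1 - 1)))); first [done | congr pair; lia]
  | apply: (Pt _ _ _ _ _ _ (Hr _ _ _ (Hr _ _ _ (HD (x1 - 1) (y1 - 1))))); first [done | congr pair; lia] ].
Qed.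


Section Exist2.
Variable F : fieldType.

Lemma exist_v (u : vtx -> F) : MR_minus1 u -> exists v : vtx -> F, fgh_eq u v.
Proof.
move=> H; have [Nh Ny Nd Cl] := MR_facts H.
pose X a b := - (u (a+1+1, b+1) - u (a+1, b)) * (u (a+1+1, b+1) - u (a+1+1, b)) /
   ((u (a+1,b) - u (a,b)) * (u (a+1+1,b+1) - u (a+1,b+1))).
pose Yr a b := - (u (a+1,b+1) - u (a,b+1)) * (u (a+1,b+1+1) - u (a,b+1)) /
   ((u (a+1,b+1) - u (a+1,b)) * (u (a,b+1) - u (a,b))).
have NX a b : X a b != 0.
  by rewrite /X !mulf_neq0 ?oppr_eq0 ?invr_eq0 ?mulf_neq0 ?Nh ?Ny ?Nd.
have NY a b : Yr a b != 0.
  by rewrite /Yr !mulf_neq0 ?oppr_eq0 ?invr_eq0 ?mulf_neq0 ?Nh ?Ny ?Nd.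
have CXY a b : X a b * Yr (a + 1) b = Yr a b * X a (b + 1).
  apply/eqP; rewrite -subr_eq0; apply/eqP.
  have hh := Nh a b; have h1 := Nh (a+1) (b+1); have h2 := Nh (a+1) (b+1+1).
  have h3 := Nh a (b+1); have y1 := Ny (a+1) b; have y0 := Ny a b.
  have y2 := Ny (a+1+1) b.
  transitivity (((u (a+1+1,b+1) - u (a+1,b)) * (u (a,b+1) - u (a,b)) *
      (u (a+1+1,b+1+1) - u (a+1,b+1+1)) -
      (u (a+1,b) - u (a,b)) * (u (a+1,b+1+1) - u (a,b+1)) *
      (u (a+1+1,b+1+1) - u (a+1+1,b+1))) *
      ((u (a+1+1,b+1+1) - u (a+1,b+1)) /
       ((u (a+1,b) - u (a,b)) * (u (a+1,b+1) - u (a+1,b)) * (u (a,b+1) - u (a,b)) *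
        (u (a+1+1,b+1+1) - u (a+1,b+1+1))))).
    by rewrite /X /Yr; field; rewrite ?Nh ?Ny ?Nd.
  by rewrite Cl subrr mul0r.
have [lu [Nl HL]] := integ_mul NX NY CXY.
pose ld a b := lu a b * (u (a+1,b+1) - u (a,b+1)) / (u (a+1,b+1) - u (a+1,b)).
have Nld a b : ld a b != 0 by rewrite /ld !mulf_neq0 ?invr_eq0 ?Nl ?Nh ?Ny.
pose Hh a b := - (u (a+1,b+1) - u (a,b)) / lu a b.
pose Yv a b := - (u (a+1,b+1) - u (a,b)) / ld a b.
have CV a b : Hh a b + Yv (a + 1) b = Yv a b + Hh a (b + 1).
  rewrite /Hh /Yv /ld (proj1 (HL a b)) (proj2 (HL a b)) /X /Yr.
  by field; rewrite ?oppr_eq0 ?Nh ?Ny ?Nd ?Nl.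
have [V HV] := integ_add CV.
exists (fun z => V z.1 z.2).
apply/fgh_good; apply: tri_cases; last exact: good_rot.
- move=> a b; exists (lu a b); split => //.
  + by rewrite Nh Ny -oppr_eq0 opprB Nd.
  + rewrite /= (proj2 (HV (a + 1) b)) (proj1 (HV a b)).
    rewrite /Hh /Yv /ld (proj1 (HL a b)) /X.
    split; by field; rewrite ?oppr_eq0 ?Nh ?Ny ?Nd ?Nl.
- move=> a b; exists (ld a b); split => //.
  + by rewrite Nh Ny -oppr_eq0 opprB Nd.
  + rewrite /= (proj1 (HV a (b + 1))) (proj2 (HV a b)).
    rewrite /Hh /Yv /ld (proj2 (HL a b)) /Yr.
    split; by field; rewrite ?oppr_eq0 ?Nh ?Ny ?Nd ?Nl.
Qed.
End Exist2.

Unset Implicit Arguments.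

Theorem theorem13 (R : realType) :
  (forall u v : vtx -> R[i], fgh_eq u v -> MR_minus1 u /\ MR_minus1 v) /\
  (forall u : vtx -> R[i], MR_minus1 u ->
     exists v : vtx -> R[i],
       [/\ fgh_eq u v, MR_minus1 v &
           forall v' : vtx -> R[i], fgh_eq u v' ->
             exists a b : R[i], a != 0 /\ forall z, v' z = a * v z + b]) /\
  (forall u v : vtx -> R[i], fgh_eq u v ->
     exists w : vtx -> R[i],
       [/\ fgh_eq v w, fgh_eq w u, MR_minus1 w &
           forall w' : vtx -> R[i], fgh_eq v w' -> fgh_eq w' u ->
             exists a b : R[i], a != 0 /\ forall z, w' z = a * w z + b]).
Proof.
split; [|split].
- by move=> u v; apply: part1.
- move=> u Hu; have [v Hv] := exist_v Hu.
  exists v; split => //; first exact: (part1 Hv).2.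
  by move=> v' Hv'; apply: fgh_uniq Hv Hv'.
- move=> u v Huv; have [_ Mv] := part1 Huv.
  have [w Hw] := exist_v Mv.
  exists w; split => //.
  + apply/fgh_good => z1 z2 z3 p.
    exact: good_trans ((proj1 (fgh_good u v)) Huv _ _ _ p) ((proj1 (fgh_good v w)) Hw _ _ _ p).
  + exact: (part1 Hw).2.
  + by move=> w' Hw' _; apply: fgh_uniq Hw Hw'.
Qed.
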